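(* Let $\ell\ge 3$ and $n_1,\dots,n_\ell$ be integers with $n_i\ge 2$ for all $i$, and let $G$ be the xor-product of the complete graphs $K_{n_1},\dots,K_{n_\ell}$. Then $\omega(G)\ge n_1+\dots+n_\ell-2\ell-1$.
   Context: The xor-product of graphs $G_1,\dots,G_\ell$ has vertex set $V(G_1)\times\dots\times V(G_\ell)$, two vertices $(g_1,\dots,g_\ell)$ and $(g'_1,\dots,g'_\ell)$ being adjacent iff the number of indices $i$ with $g_ig'_i\in E(G_i)$ is odd. $\omega$ denotes the clique number. *)

(* Defs.v *)
From mathcomp Require Import all_boot.
Set Implicit Arguments. Unset Strict Implicit. Unset Printing Implicit Defensive.

Definition xor_vertex (l : nat) (n : 'I_l -> nat) : finType :=
  {dffun forall i : 'I_l, 'I_(n i)}.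

Definition complete_adj (m : nat) (a b : 'I_m) : bool := a != b.

Definition xor_adj (l : nat) (n : 'I_l -> nat) (g g' : xor_vertex n) : bool :=
  odd #|[set i : 'I_l | complete_adj (g i) (g' i)]|.

Definition is_clique (T : finType) (adj : rel T) (A : {set T}) : bool :=
  [forall x in A, forall y in A, (x != y) ==> adj x y].

(* Main.v *)
Require Import Defs.
From mathcomp Require Import all_boot zify.


Definition D (t : nat) (f g : nat -> nat) : nat := \sum_(i < t) (f i != g i).

Lemma DS t f g : D t.+1 f g = D t f g + (f t != g t).
Proof. by rewrite /D big_ord_recr. Qed.

Lemma D_eq t f g f' g' : (forall i, i < t -> (f i != g i) = (f' i != g' i)) ->
  D t f g = D t f' g'.
Proof. by move=> H; apply: eq_bigr => i _; rewrite H. Qed.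

Lemma D_ext t m f g : t <= m -> (forall i, t <= i < m -> f i = g i) ->
  D m f g = D t f g.
Proof.
elim: m => [|m IH]; first by rewrite leqn0 => /eqP ->.
rewrite leq_eqVlt => /orP [/eqP -> //|Ht] H.
rewrite DS IH //; last by move=> i /andP[Hi Him]; apply: H; rewrite Hi ltnS ltnW.
by rewrite H ?eqxx ?addn0 // -ltnS Ht leqnn.
Qed.

Lemma D_sym t f g : D t f g = D t g f.
Proof. by apply: D_eq => i _; rewrite eq_sym. Qed.

Lemma D_refl t f : D t f f = 0.
Proof. by apply: big1 => i _; rewrite eqxx. Qed.

Lemma sum_interval N lo hi :
  \sum_(i < N) (lo <= i < hi) = minn hi N - minn lo N.
Proof.
elim: N => [|N IH]; first by rewrite big_ord0 !minn0.
rewrite big_ord_recr /= IH.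
case: (leqP lo N) => H1; case: (ltnP N hi) => H2 /=; lia.
Qed.

Lemma card_ord_set N (P : pred nat) : #|[set i : 'I_N | P i]| = \sum_(i < N) P i.
Proof.
rewrite -sum1_card big_mkcond /=; apply: eq_bigr => i _.
by rewrite inE; case: (P i).
Qed.

Definition u (t i : nat) : nat := if i == 0 then ~~ odd t else i < t.
Definition v (t i : nat) : nat := if i == 0 then odd t else i < t.
Definition cls (t b i : nat) : nat := if i == t then b else u t i.
Definition q (z : nat -> nat) (a i : nat) : nat := if i == 0 then a else z i.

Lemma u_lt t i : u t i < 2. Proof. by rewrite /u; case: ifP => _; [case: (odd t)|case: (i < t)]. Qed.
Lemma v_lt t i : v t i < 2. Proof. by rewrite /v; case: ifP => _; [case: (odd t)|case: (i < t)]. Qed.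

Lemma Duv s : 0 < s -> D s (u s) (v s) = 1.
Proof.
move=> Hs; rewrite (@D_ext 1) //; last first.
  by move=> i /andP[Hi Hs']; rewrite /u /v; case: eqP => // Hi0; move: Hi; rewrite Hi0.
by rewrite DS /D big_ord0 /u /v /=; case: (odd s).
Qed.

Lemma u_next t i : 0 < t -> i < t -> u t.+1 i = v t i.
Proof. by move=> Ht Hi; rewrite /u /v; case: eqP => _ //=; rewrite ?negbK // Hi ltnS ltnW. Qed.
Lemma v_next t i : 0 < t -> i < t -> v t.+1 i = u t i.
Proof. by move=> Ht Hi; rewrite /u /v; case: eqP => _ //=; rewrite ?negbK // Hi ltnS ltnW. Qed.
Lemma u_at t : 0 < t -> u t.+1 t = 1.
Proof. by move=> Ht; rewrite /u (gtn_eqF Ht) ltnSn. Qed.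
Lemma v_at t : 0 < t -> v t.+1 t = 1.
Proof. by move=> Ht; rewrite /v (gtn_eqF Ht) ltnSn. Qed.
Lemma cls_hi s b t : 0 < t -> s < t -> cls s b t = 0.
Proof. move=> Ht Hst; rewrite /cls /u (gtn_eqF Hst) (gtn_eqF Ht) ltnNge ltnW //. Qed.
Lemma cls_lo s b i : i < s -> cls s b i = u s i.
Proof. by move=> H; rewrite /cls (ltn_eqF H). Qed.

Lemma Cuv s b t : 0 < s -> s < t -> 2 <= b ->
  odd (D t (cls s b) (u t)) = false /\ odd (D t (cls s b) (v t)) = true.
Proof.
move=> Hs Hst Hb; elim: t Hst => // t IH; rewrite ltnS leq_eqVlt => /orP[/eqP <-|Hst].
  have Hc : cls s b s = b by rewrite /cls eqxx.
  rewrite !DS Hc u_at // v_at //.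
  rewrite [D s _ (u s.+1)](@D_eq s _ _ (u s) (v s)); last first.
    by move=> i Hi; rewrite cls_lo // u_next.
  rewrite [D s _ (v s.+1)](@D_eq s _ _ (u s) (u s)); last first.
    by move=> i Hi; rewrite cls_lo // v_next.
  by rewrite Duv // D_refl; case: (b != 1) (neq_ltn b 1) => //; rewrite Hb orbT.
have Ht : 0 < t by apply: leq_ltn_trans Hst.
rewrite !DS cls_hi // u_at // v_at //.
rewrite (@D_eq t _ _ (cls s b) (v t)); last by move=> i Hi; rewrite u_next.
rewrite [D t _ (v t.+1)](@D_eq t _ _ (cls s b) (u t)); last by move=> i Hi; rewrite v_next.
by case: (IH Hst) => H1 H2; rewrite /= !addn1 /= H1 H2.
Qed.

Lemma q_inv (z : nat -> nat) (cl : nat -> nat -> bool) (al be ga : nat -> bool) a :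
 2 <= a -> be 1 -> ga 1 ->
 (forall t, 0 < t -> al t.+1 = al t (+) (z t != 0)) ->
 (forall t, 0 < t -> be t.+1 = ga t (+) (z t != 1)) ->
 (forall t, 0 < t -> ga t.+1 = be t (+) (z t != 1)) ->
 (forall s b, 0 < s -> cl s b -> (z s != b) && (al s.+1 == ~~ be s)) ->
 forall t, 0 < t ->
   [/\ odd (D t (q z a) (u t)) = be t, odd (D t (q z a) (v t)) = ga t &
       forall s b, 0 < s -> s < t -> cl s b -> odd (D t (q z a) (cls s b)) = al t].
Proof.
move=> Ha Hb1 Hg1 Hal Hbe Hga Hcl; elim=> // t IH.
case: (posnP t) => [->|Ht] _.
  have Ha0 : (a != 0) && (a != 1) by case: a Ha {IH} => [|[|a]].
  case/andP: Ha0 => Ha0 Ha1.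
  rewrite !DS /D !big_ord0 /q /u /v /= Ha0 Ha1 Hb1 Hg1.
  split => //.
  by move=> s b Hs; rewrite ltnS leqn0 => /eqP Hs0; move: Hs; rewrite Hs0.
case: (IH Ht) => IHu IHv IHc.
have Hqt : q z a t = z t by rewrite /q (gtn_eqF Ht).
split.
- rewrite DS Hqt u_at // (@D_eq t _ _ (q z a) (v t)); last by move=> i Hi; rewrite u_next.
  by rewrite oddD IHv oddb Hbe.
- rewrite DS Hqt v_at // (@D_eq t _ _ (q z a) (u t)); last by move=> i Hi; rewrite v_next.
  by rewrite oddD IHu oddb Hga.
move=> s b Hs; rewrite ltnS leq_eqVlt => /orP [/eqP Est|Hst] Hc.
  subst s; case/andP: (Hcl t b Ht Hc) => Hzb /eqP ->.
  have Hc2 : cls t b t = b by rewrite /cls eqxx.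
  rewrite DS Hqt Hc2 (@D_eq t _ _ (q z a) (u t)); last by move=> i Hi; rewrite cls_lo.
  by rewrite oddD IHu Hzb addbT.
rewrite DS Hqt cls_hi // oddD oddb (IHc s b) // Hal //.
Qed.

Definition vec (z : nat -> nat) (t b : nat) : nat -> nat :=
  if t == 0 then q z b else cls t b.

Lemma cls_beyond t b i : t < i -> cls t b i = 0.
Proof. by move=> H; rewrite cls_hi // (leq_ltn_trans _ H). Qed.

Lemma PW l z (mem : nat -> nat -> bool) :
 (forall t b, mem t b -> 2 <= b) ->
 (forall a s b, 2 <= a -> 0 < s -> s < l -> mem s b -> odd (D l (q z a) (cls s b))) ->
 forall t b t' b', t < l -> t' < l -> mem t b -> mem t' b' -> (t != t') || (b != b') ->
 odd (D l (vec z t b) (vec z t' b')).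
Proof.
move=> Hm2 HQ t b t' b'.
wlog: t b t' b' / t <= t'.
  move=> W Ht Ht' Hm Hm' Hne; case: (leqP t t') => H; first exact: W.
  rewrite D_sym; apply: W => //; first exact: ltnW.
  by rewrite eq_sym [b' == b]eq_sym.
move=> Hle Ht Ht' Hm Hm' Hne.
rewrite /vec; have [Et0|Htp] := posnP t.
  have [Et'0|Ht'p] := posnP t'.
    move: Hne; rewrite Et0 Et'0 eqxx /= => Hbb; subst t t'.
    rewrite (@D_ext 1) //; last by move=> i /andP[Hi _]; rewrite /q !gtn_eqF.
    by rewrite DS /D big_ord0 /q /= Hbb.
  by apply: HQ => //; apply: Hm2 Hm.
rewrite (gtn_eqF (leq_trans Htp Hle)).
move: Hle; rewrite leq_eqVlt => /orP[/eqP Ett|Hlt].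
  subst t'; move: Hne; rewrite eqxx /= => Hbb.
  rewrite (@D_ext t.+1) //; last first.
    by move=> i /andP[Hi _]; rewrite !cls_beyond.
  rewrite DS {3 4}/cls !eqxx Hbb (@D_eq t _ _ (u t) (u t)) ?D_refl //.
  by move=> i Hi; rewrite !cls_lo.
rewrite (@D_ext t'.+1) //; last first.
  by move=> i /andP[Hi _]; rewrite !cls_beyond // (ltn_trans Hlt).
have Hb' := Hm2 _ _ Hm'.
rewrite DS cls_hi // ?(leq_trans Htp (ltnW Hlt)) //.
have -> : cls t' b' t' = b' by rewrite /cls eqxx.
rewrite (@D_eq t' _ _ (cls t b) (u t')); last by move=> i Hi; rewrite [cls t' _ _]cls_lo.
case: (@Cuv t b t' Htp Hlt (Hm2 _ _ Hm)) => H1 _.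
by rewrite oddD H1 eq_sym gtn_eqF // (ltn_trans _ Hb').
Qed.

Definition Na T := odd T == odd T./2.
Definition Nb T := ~~ odd T./2.

Lemma halfS T : odd T.+1./2 = odd T (+) odd T./2.
Proof. by rewrite -uphalfE uphalf_half oddD oddb. Qed.

Lemma NaS T : Na T.+1 = Na T (+) ~~ odd T.
Proof. by rewrite /Na halfS /=; case: (odd T); case: (odd T./2). Qed.
Lemma NbS T : Nb T.+1 = Nb T (+) odd T.
Proof. by rewrite /Nb halfS; case: (odd T); case: (odd T./2). Qed.
Lemma Na_cl T : Na T.+1 = ~~ Nb T.
Proof. by rewrite /Na /Nb halfS /=; case: (odd T); case: (odd T./2). Qed.

Lemma Na_mod T : (T %% 4 == 0) || (T %% 4 == 3) -> Na T.
Proof.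
move=> H; have Hr : T %% 4 < 4 by rewrite ltn_mod.
rewrite /Na {1 2}(divn_eq T 4); move: H Hr; move: (T %/ 4) (T %% 4) => k r.
have -> : k * 4 = (k * 2).*2 by rewrite -muln2 -mulnA.
rewrite halfD doubleK oddD odd_double /= add0n oddD oddM andbF /=.
by case: r => [|[|[|[|r]]]].
Qed.
Lemma nb0 (b : bool) : ((b : nat) != 0) = b. Proof. by case: b. Qed.
Lemma nb1 (b : bool) : ((b : nat) != 1) = ~~ b. Proof. by case: b. Qed.

Theorem theorem3p3 (l : nat) (n : 'I_l -> nat) :
  3 <= l -> (forall i, 2 <= n i) ->
  exists A : {set xor_vertex n},
    is_clique (@xor_adj l n) A /\
    \sum_(i < l) n i <= #|A| + 2 * l + 1.
Proof.
case: l n => [|l'] n // Hl Hn.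
pose nn (i : nat) := n (inord i).
have nnE (i : 'I_l'.+1) : nn i = n i by rewrite /nn inord_val.
have nn2 i : 2 <= nn i by apply: Hn.
pose sp := (l'.+1 %% 4 == 2).
pose c3 := 3 <= nn 2.
pose ph (t : nat) := if sp then (if t <= 2 then t else t + (if c3 then 1 else 2))
                     else t + (if l'.+1 %% 4 == 1 then 3 else 0).
pose z (t : nat) : nat := if sp && (t == 2) then (if c3 then 2 else 0) else ~~ odd (ph t).
pose lo (t : nat) := if sp && (t == 2) then 3 else 2.
pose mem (t b : nat) := lo t <= b < nn t.
have Hm2 t b : mem t b -> 2 <= b.
  by rewrite /mem /lo => /andP[H _]; apply: leq_trans H; case: (_ && _).
have phS t : 0 < t -> ~~ (sp && (t == 2)) -> ph t.+1 = (ph t).+1.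
  move=> Ht Ht2; rewrite /ph; case: ifP => //= Hsp.
  move: Ht2; rewrite Hsp /= => Ht2.
  case: (ltnP t 2) => H1; case: (leqP t 2) => H2; move: Ht2; first [case: ifP => _; lia | lia].
have HQ a s b : 2 <= a -> 0 < s -> s < l'.+1 -> mem s b ->
    odd (D l'.+1 (q z a) (cls s b)).
  move=> Ha Hs Hsl Hm.
  have Hq := @q_inv z mem (fun t => Na (ph t)) (fun t => Nb (ph t)) (fun t => Nb (ph t)) a Ha.
  have Hb1 : Nb (ph 1) by rewrite /ph; case: ifP => _ //; case: ifP.
  have HaS : forall t, 0 < t -> Na (ph t.+1) = Na (ph t) (+) (z t != 0).
    move=> t Ht; case E: (sp && (t == 2)).
      case/andP: E => Hsp /eqP Et; subst t.
      by rewrite /z /ph Hsp /=; case: ifP.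
    by rewrite phS ?E // NaS /z E nb0.
  have HbS : forall t, 0 < t -> Nb (ph t.+1) = Nb (ph t) (+) (z t != 1).
    move=> t Ht; case E: (sp && (t == 2)).
      case/andP: E => Hsp /eqP Et; subst t.
      by rewrite /z /ph Hsp /=; case: ifP.
    by rewrite phS ?E // NbS /z E nb1 negbK.
  have Hcl : forall s b, 0 < s -> mem s b -> (z s != b) && (Na (ph s.+1) == ~~ Nb (ph s)).
    move=> t b' Ht; case E: (sp && (t == 2)).
      case/andP: E => Hsp /eqP Et; subst t.
      rewrite /mem /lo /z /ph Hsp /=.
      case: ifP => Hc /=.
        by case/andP=> H3 _; rewrite eq_sym gtn_eqF.
      by case/andP=> H3 H4; move: Hc; rewrite /c3 (leq_trans H3 (ltnW H4)).
    move=> /Hm2 Hb; rewrite phS ?E // Na_cl eqxx andbT /z E.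
    by rewrite eq_sym gtn_eqF // (leq_trans _ Hb) //; case: (~~ _).
  case: (Hq Hb1 Hb1 HaS HbS HbS Hcl l'.+1 (ltn0Sn _)) => _ _ /(_ s b Hs Hsl Hm) ->.
  apply: Na_mod; rewrite /ph; case: ifP => Esp.
    move: Esp; rewrite /sp => /eqP Hm4; rewrite leqNgt (leq_trans _ Hl) //=.
    case: ifP => _; lia.
  move: Esp; rewrite /sp => /eqP Hm4.
  case: ifP => Hm1; move/eqP: Hm1 => Hm1; lia.
pose d0 (i : 'I_l'.+1) : 'I_(n i) := Ordinal (ltnW (Hn i)).
pose toV (f : nat -> nat) : xor_vertex n :=
  @finfun _ (fun i => 'I_(n i)) (fun i => insubd (d0 i) (f i)).
have toVE (f : nat -> nat) (i : 'I_l'.+1) : f i < n i -> val (toV f i) = f i.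
  by move=> H; rewrite /toV ffunE insubdK.
have adjV (f g : nat -> nat) : (forall i : 'I_l'.+1, f i < n i) -> (forall i : 'I_l'.+1, g i < n i) ->
    xor_adj (toV f) (toV g) = odd (D l'.+1 f g).
  move=> Hf Hg; rewrite /xor_adj /D -sum1_card big_mkcond /=; congr odd.
  apply: eq_bigr => i _.
  by rewrite inE /complete_adj -val_eqE /= !toVE //; case: (f i != g i).
have Hrange t b : mem t b -> forall i : 'I_l'.+1, vec z t b i < n i.
  move=> Hm i; rewrite -nnE /vec; case: eqP => [Et|Et].
    rewrite /q; case: eqP => [Ei|Ei].
      by rewrite Ei -Et; case/andP: Hm.
    rewrite /z; case: ifP => [/andP[_ /eqP Ei2]|_].
      by case: ifP => Hc; [rewrite Ei2 | exact: leq_trans _ (nn2 i)].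
    by apply: leq_trans (nn2 i); case: (~~ _).
  rewrite /cls; case: eqP => [Ei|_].
    by rewrite Ei; case/andP: Hm.
  exact: leq_trans (u_lt _ _) (nn2 i).
pose NN := \sum_(i < l'.+1) n i + 3.
pose P : {set 'I_l'.+1 * 'I_NN} := [set p : 'I_l'.+1 * 'I_NN | mem p.1 p.2].
pose F (p : 'I_l'.+1 * 'I_NN) := toV (vec z p.1 p.2).
have HPW (p p' : 'I_l'.+1 * 'I_NN) : p \in P -> p' \in P -> p != p' ->
    xor_adj (F p) (F p').
  case: p p' => [t b] [t' b']; rewrite !inE /= => Hp Hp' Hne.
  rewrite /F /= adjV; [|exact: Hrange|exact: Hrange].
  apply: (@PW _ _ mem Hm2 HQ) => //.
  by move: Hne; rewrite xpair_eqE negb_and -!val_eqE.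
exists (F @: P); split.
  apply/forallP => x; apply/implyP => /imsetP [p Hp ->].
  apply/forallP => y; apply/implyP => /imsetP [p' Hp' ->].
  apply/implyP => Hne; apply: HPW => //.
  by apply: contra Hne => /eqP ->.
rewrite card_in_imset; last first.
  move=> p p' Hp Hp' Heq; apply/eqP; apply: contraT => Hne.
  have Hr : forall i : 'I_l'.+1, vec z p'.1 p'.2 i < n i.
    by case: p' {Heq Hne} Hp' => t b; rewrite inE /= => /Hrange.
  by have := HPW p p' Hp Hp' Hne; rewrite Heq /F adjV // D_refl.
have cardP : #|P| = \sum_(t < l'.+1) (nn t - lo t).
  rewrite -sum1_card.
  rewrite (eq_bigl (fun p : 'I_l'.+1 * 'I_NN => xpredT p.1 && mem p.1 p.2)); last by move=> pp; rewrite inE.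
  rewrite -(pair_big_dep xpredT (fun (t : 'I_l'.+1) (b : 'I_NN) => mem t b) (fun _ _ => 1)) /=.
  apply: eq_bigr => t _.
  rewrite big_mkcond /= (eq_bigr (fun b : 'I_NN => (lo t <= b < nn t) : nat)); last first.
    by move=> b _; rewrite /mem; case: (_ && _).
  rewrite sum_interval.
  have Hnt : nn t <= NN.
    by rewrite nnE /NN (bigD1 t) //= -addnA leq_addr.
  have Hlo : lo t <= NN by rewrite /lo /NN; case: ifP => _; lia.
  by rewrite (minn_idPl Hnt) (minn_idPl Hlo).
rewrite cardP.
have H1 : \sum_(i < l'.+1) n i <= \sum_(t < l'.+1) ((nn t - lo t) + lo t).
  by apply: leq_sum => t _; rewrite nnE; move: (lo t) (n t) => k m; lia.
rewrite big_split /= in H1.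
have H2 : \sum_(t < l'.+1) lo t <= \sum_(t < l'.+1) (2 + (2 <= t < 3)).
  by apply: leq_sum => t _; rewrite /lo; case: ifP => [/andP[_ /eqP ->]|] //.
rewrite big_split /= sum_interval sum_nat_const card_ord in H2.
move: H1 H2; move: (\sum_(i < l'.+1) n i) (\sum_(t < l'.+1) (nn t - lo t)) (\sum_(t < l'.+1) lo t) => s1 s2 s3.
lia.
Qed.
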